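(* Fix $D\ge 1$, $\lambda>0$, and vectors $\mathbf{v}_1,\dots,\mathbf{v}_D\in\mathbb{R}^D$ such that, with $\mathbf{v}_{D+1}:=\mathbf{0}$, $\|\mathbf{v}_d-\mathbf{v}_{d'}\|_2=\lambda$ for all $d\neq d'$ in $\{1,\dots,D+1\}$. For a current state $\boldsymbol{\theta}\in\mathbb{R}^D$, let the multiproposal $q(\boldsymbol{\theta},\cdot)$ be the distribution of the configuration $$(\boldsymbol{\theta}^*_1,\dots,\boldsymbol{\theta}^*_{D+1}) := \mathbf{Q}(\mathbf{v}_1,\dots,\mathbf{v}_D,\mathbf{0})+\boldsymbol{\theta},\qquad \mathbf{Q}\sim\mathcal{H}(\mathcal{O}_D),$$ where $\mathcal{H}(\mathcal{O}_D)$ is the uniform (Haar) probability distribution on the orthogonal group $\mathcal{O}_D$ and adding $\boldsymbol{\theta}$ means adding it to each column (so $\boldsymbol{\theta}^*_{D+1}=\boldsymbol{\theta}$). Then for any configuration $\boldsymbol{\Theta}^*=(\boldsymbol{\theta}^*_1,\dots,\boldsymbol{\theta}^*_{D+1})$ so generated, the multiproposal satisfies the symmetry relation $$q(\boldsymbol{\theta}^*_1,\boldsymbol{\Theta}^* )=\dots=q(\boldsymbol{\theta}^*_d,\boldsymbol{\Theta}^* )=\dots=q(\boldsymbol{\theta}^*_{D+1},\boldsymbol{\Theta}^* ),$$ i.e. the configuration (as a set of $D+1$ points) is equally likely to be generated starting from any one of its points as the current state.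
   Context: $q(\boldsymbol{\theta},\boldsymbol{\Theta}^* )$ denotes the probability (density) that the proposal mechanism, started at current state $\boldsymbol{\theta}$, produces the set of proposals $\boldsymbol{\Theta}^*$, which always contains $\boldsymbol{\theta}$ itself. *)

(* Defs.v *)
From HB Require Import structures.
From mathcomp Require Import all_boot all_order all_algebra all_fingroup.
From mathcomp Require Import all_classical all_reals all_analysis.
From mathcomp Require Import measurable_realfun.
Set Implicit Arguments. Unset Strict Implicit. Unset Printing Implicit Defensive.
Import Order.TTheory GRing.Theory Num.Theory.
Local Open Scope ring_scope.

Definition enorm (R : realType) (D : nat) (x : 'cV[R]_D) : R :=
  Num.sqrt (\sum_(i < D) (x i 0) ^+ 2).

Definition is_orth_mx (R : realType) (D : nat) (Q : 'M[R]_D) : Prop :=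
  Q^T *m Q = 1%:M.

(* Encodings into tuples (which carry the product Borel sigma-algebra). *)
Definition tup_of_cv (R : realType) (D : nat) (x : 'cV[R]_D) : D.-tuple R :=
  [tuple x i 0 | i < D].
Definition cv_of_tup (R : realType) (D : nat) (t : D.-tuple R) : 'cV[R]_D :=
  \col_i tnth t i.
Definition tup_of_mx (R : realType) (D : nat) (Q : 'M[R]_D) : D.-tuple (D.-tuple R) :=
  [tuple [tuple Q i j | j < D] | i < D].

Definition perm_tup (T : Type) (n : nat) (s : 'S_n) (t : n.-tuple T) : n.-tuple T :=
  [tuple tnth t (s i) | i < n].

(* The multiproposal configuration Q (v_1, ..., v_D, v_{D+1}) + theta,
   each column shifted by theta; the i-th entry is theta^*_{i+1}. *)
Definition config (R : realType) (D : nat) (v : 'I_D.+1 -> 'cV[R]_D)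
    (theta : D.-tuple R) (Q : 'M[R]_D) : D.+1.-tuple (D.-tuple R) :=
  [tuple tup_of_cv (Q *m v i + cv_of_tup theta) | i < D.+1].

(* Integral with respect to Lebesgue measure on R^n, as the iterated
   integral of the one-dimensional Lebesgue measure (for nonnegative
   measurable integrands this is the product Lebesgue integral, by Tonelli). *)
Fixpoint leb_int (R : realType) (n : nat) : (n.-tuple R -> \bar R) -> \bar R :=
  match n return (n.-tuple R -> \bar R) -> \bar R with
  | 0 => fun f => f [tuple]
  | m.+1 => fun f =>
      (\int[@lebesgue_measure R]_x leb_int (fun t : m.-tuple R => f (cons_tuple x t)))%E
  end.

(* Main.v *)
Require Import Defs.
From HB Require Import structures.
From mathcomp Require Import all_boot all_order all_algebra all_fingroup.
From mathcomp Require Import all_classical all_reals all_analysis.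
From mathcomp Require Import measurable_realfun.
From mathcomp Require Import ring lra.
Import Order.TTheory GRing.Theory Num.Theory.
Local Open Scope ring_scope.
Local Open Scope classical_set_scope.

Definition shR {R : realType} (a : R) : measurableTypeR R -> measurableTypeR R := fun x => (x + a)%R.
Lemma measurable_shR (R : realType) (a : R) : measurable_fun [set: measurableTypeR R] (shR a).
Proof. have := @measurable_funD _ R R setT (fun x => x) (fun _ => a).
 by apply => //; exact: measurable_cst. Qed.
HB.instance Definition _ (R : realType) (a : R) :=
  isMeasurableFun.Build _ _ _ _ (shR a) (@measurable_shR R a).

Lemma leb_shift (R : realType) (a : R) (h : R -> \bar R) :
  measurable_fun [set: R] h -> (forall x, (0 <= h x)%E) ->
  (\int[@lebesgue_measure R]_x h (x + a)%R = \int[@lebesgue_measure R]_x h x)%E.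
Proof.
move=> mh h0.
have E : forall A, measurable A -> A `<=` setT ->
   (pushforward (@lebesgue_measure R) (shR a)) A = lebesgue_measure A.
  move=> A mA _; apply/esym; apply: lebesgue_measure_unique => // X [[x y] _ <-].
  rewrite /= /pushforward /=.
  have -> : shR a @^-1` `]x, y] = `]x - a, y - a]%classic.
    apply/seteqP; split => z /=; rewrite !in_itv /= /shR.
      by move=> /andP[h1 h2]; rewrite ltrBlDr lerBrDr h1 h2.
    by move=> /andP[h1 h2]; rewrite -ltrBlDr -lerBrDr h1 h2.
  rewrite !lebesgue_measure_itv /= !lte_fin ltrD2r; case: ifP => // _.
  by rewrite -!EFinD; congr (_%:E); rewrite opprB addrA subrK.
transitivity (\int[pushforward (@lebesgue_measure R) (shR a)]_x h x)%E; last first.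
  by apply: eq_measure_integral => A mA _; apply: E.
rewrite ge0_integral_pushforward //.
Qed.

Section generic.
Variable R : realType.

Lemma leb_int_ge0 {n} (F : n.-tuple R -> \bar R) :
  (forall t, (0 <= F t)%E) -> (0 <= leb_int F)%E.
Proof.
elim: n F => [|n IH] F F0 /=; first exact: F0.
by apply: integral_ge0 => x _; apply: IH => t.
Qed.

Lemma leb_int_meas n d (X : measurableType d) (F : X * n.-tuple R -> \bar R) :
  measurable_fun setT F -> (forall z, (0 <= F z)%E) ->
  measurable_fun setT (fun x => leb_int (fun t => F (x, t))).
Proof.
elim: n d X F => [|n IH] d X F mF F0 /=.
  apply: measurableT_comp mF _.
  apply: measurable_fun_pair => //; exact: measurable_cst.
pose G := fun z : (X * measurableTypeR R) * n.-tuple R =>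
  F (z.1.1, cons_tuple z.1.2 z.2).
have mG : measurable_fun setT G.
  apply: measurableT_comp mF _.
  apply: measurable_fun_pair.
    exact: (measurableT_comp measurable_fst measurable_fst).
  apply: (@measurable_cons _ _ _ R (fun z : (X * measurableTypeR R) * n.-tuple R => z.1.2) n snd).
    exact: (measurableT_comp measurable_snd measurable_fst).
  exact: measurable_snd.
have := IH _ _ G mG (fun z => F0 _).
move=> mH.
have := @measurable_fun_fubini_tonelli_F _ _ _ _ _ (@lebesgue_measure R) _ mH (fun z => leb_int_ge0 _ (fun t => F0 _)).
by apply.
Qed.


Lemma leb_int_tonelli n d (X : measurableType d) (m : {sigma_finite_measure set X -> \bar R})
  (F : X * n.-tuple R -> \bar R) :
  measurable_fun setT F -> (forall z, (0 <= F z)%E) ->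
  (\int[m]_x leb_int (fun t => F (x, t)) = leb_int (fun t => \int[m]_x F (x, t)))%E.
Proof.
elim: n F => [|n IH] F mF F0 //=.
pose G := fun z : (X * measurableTypeR R) * n.-tuple R =>
  F (z.1.1, cons_tuple z.1.2 z.2).
have mG : measurable_fun setT G.
  apply: measurableT_comp mF _.
  apply: measurable_fun_pair.
    exact: (measurableT_comp measurable_fst measurable_fst).
  apply: (@measurable_cons _ _ _ R (fun z : (X * measurableTypeR R) * n.-tuple R => z.1.2) n snd).
    exact: (measurableT_comp measurable_snd measurable_fst).
  exact: measurable_snd.
have mH := @leb_int_meas n _ _ G mG (fun z => F0 _).
have := @fubini_tonelli _ _ _ _ _ m (@lebesgue_measure R) _ mH (fun z => leb_int_ge0 _ (fun t => F0 _)).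
rewrite /= => ->.
apply: eq_integral => y _.
have := IH (fun z => F (z.1, cons_tuple y z.2)).
apply.
  apply: measurableT_comp mF _.
  apply: measurable_fun_pair => //.
  apply: (@measurable_cons _ _ _ R (fun z : X * n.-tuple R => y) n snd) => //.
by move=> z; apply: F0.
Qed.

Definition tadd {n} (a t : n.-tuple R) : n.-tuple R := [tuple tnth t i + tnth a i | i < n].

Lemma tadd_cons n (a : n.+1.-tuple R) (y : R) (t : n.-tuple R) :
  tadd a (cons_tuple y t) = cons_tuple (y + thead a) (tadd [tuple of behead a] t).
Proof.
apply: eq_from_tnth => i; rewrite tnth_mktuple.
case: i => [[|i] Hi].
  by rewrite !(tnth_nth 0) /= [thead _](tnth_nth 0).
rewrite !(tnth_nth 0) /=.
have Hi' : (i < n)%N by [].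
have := tnth_mktuple (fun j : 'I_n => tnth t j + tnth [tuple of behead a] j) (Ordinal Hi').
rewrite !(tnth_nth 0) /= => ->.
by rewrite nth_behead.
Qed.

Lemma tadd_meas n : measurable_fun setT (fun z : n.-tuple R * n.-tuple R => tadd z.1 z.2).
Proof.
apply/measurable_fun_tnthP => i.
rewrite (_ : _ \o _ = (fun z : n.-tuple R * n.-tuple R => tnth z.2 i + tnth z.1 i)); last first.
  by apply/funext => z /=; rewrite tnth_mktuple.
apply: measurable_funD.
  exact: (measurableT_comp (@measurable_tnth _ _ _ i) measurable_snd).
exact: (measurableT_comp (@measurable_tnth _ _ _ i) measurable_fst).
Qed.

Lemma leb_int_shift n (a : n.-tuple R) (G : n.-tuple R -> \bar R) :
  measurable_fun setT G -> (forall t, (0 <= G t)%E) ->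
  leb_int (fun t => G (tadd a t)) = leb_int G.
Proof.
elim: n a G => [|n IH] a G mG G0 /=.
  by congr G; apply: tuple0.
have mGc : forall y : R, measurable_fun setT (fun t : n.-tuple R => G (cons_tuple y t)).
  move=> y; apply: measurableT_comp mG _.
  apply: (@measurable_cons _ _ _ R (fun _ : n.-tuple R => y) n id) => //.
transitivity (\int[@lebesgue_measure R]_y leb_int (fun t => G (cons_tuple (y + thead a)%R t)))%E.
  apply: eq_integral => y _.
  under eq_fun => t do rewrite tadd_cons.
  exact: (IH _ (fun t => G (cons_tuple (y + thead a)%R t))).
apply: (@leb_shift R (thead a) (fun y => leb_int (fun t => G (cons_tuple y t)))).
  apply: (@leb_int_meas n _ R (fun z : R * n.-tuple R => G (cons_tuple z.1 z.2))) => //.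
  apply: measurableT_comp mG _.
  apply: (@measurable_cons _ _ _ R (fun z : R * n.-tuple R => z.1) n snd) => //.
  exact: measurable_fst.
by move=> y; apply: leb_int_ge0 => t; apply: G0.
Qed.

End generic.

Section mxmeas.
Context {R : realType}.
Context {d : measure_display} (X : measurableType d).

Definition mmeas {m n} (M : X -> 'M[R]_(m, n)) :=
  forall i j, measurable_fun setT (fun x => M x i j).

Lemma meas_bigsum (I : Type) (r : seq I) (P : pred I) (F : I -> X -> R) :
  (forall k, measurable_fun setT (F k)) ->
  measurable_fun setT (fun x => \sum_(k <- r | P k) F k x).
Proof.
move=> mF; elim: r => [|k r IH].
  under eq_fun do rewrite big_nil; exact: measurable_cst.
under eq_fun do rewrite big_cons.
case: (P k) => //.
exact: measurable_funD.
Qed.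

Lemma mmeas_mul m n p (A : X -> 'M[R]_(m, n)) (B : X -> 'M[R]_(n, p)) :
  mmeas A -> mmeas B -> mmeas (fun x => A x *m B x).
Proof.
move=> mA mB i j; under eq_fun do rewrite mxE.
apply: meas_bigsum => k; exact: measurable_funM.
Qed.

Lemma mmeas_add m n (A B : X -> 'M[R]_(m, n)) :
  mmeas A -> mmeas B -> mmeas (fun x => A x + B x).
Proof. by move=> mA mB i j; under eq_fun do rewrite mxE; exact: measurable_funD. Qed.

Lemma mmeas_opp m n (A : X -> 'M[R]_(m, n)) :
  mmeas A -> mmeas (fun x => - A x).
Proof. by move=> mA i j; under eq_fun do rewrite mxE; exact: measurable_funN. Qed.

Lemma mmeas_cst m n (A : 'M[R]_(m, n)) : mmeas (fun _ => A).
Proof. by move=> i j; exact: measurable_cst. Qed.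

Lemma mmeas_tr m n (A : X -> 'M[R]_(m, n)) : mmeas A -> mmeas (fun x => (A x)^T).
Proof. by move=> mA i j; under eq_fun do rewrite mxE; exact: mA. Qed.

Lemma meas_tup_of_cv n (M : X -> 'cV[R]_n) : mmeas M ->
  measurable_fun setT (fun x => tup_of_cv (M x)).
Proof.
move=> mM; apply/measurable_fun_tnthP => i.
rewrite (_ : _ \o _ = (fun x => M x i 0)); first exact: mM.
by apply/funext => x /=; rewrite tnth_mktuple.
Qed.

Lemma meas_tup_of_mx n (M : X -> 'M[R]_n) : mmeas M ->
  measurable_fun setT (fun x => tup_of_mx (M x)).
Proof.
move=> mM; apply/measurable_fun_tnthP => i.
apply/measurable_fun_tnthP => j.
rewrite (_ : _ \o _ = (fun x => M x i j)); first exact: mM.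
by apply/funext => x /=; rewrite !tnth_mktuple.
Qed.

Lemma mmeas_cv_of_tup n (t : X -> n.-tuple R) : measurable_fun setT t ->
  mmeas (fun x => cv_of_tup (t x)).
Proof.
move=> mt i j; under eq_fun do rewrite mxE.
exact: (measurableT_comp (@measurable_tnth _ _ _ i) mt).
Qed.

Definition mx_of_tup {n} (t : n.-tuple (n.-tuple R)) : 'M[R]_n :=
  \matrix_(i, j) tnth (tnth t i) j.

Lemma mmeas_mx_of_tup n (t : X -> n.-tuple (n.-tuple R)) : measurable_fun setT t ->
  mmeas (fun x => mx_of_tup (t x)).
Proof.
move=> mt i j; under eq_fun do rewrite mxE.
exact: (measurableT_comp (@measurable_tnth _ _ _ j)
          (measurableT_comp (@measurable_tnth _ _ _ i) mt)).
Qed.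

Lemma meas_config D (v : 'I_D.+1 -> 'cV[R]_D) (th : X -> D.-tuple R) (M : X -> 'M[R]_D) :
  measurable_fun setT th -> mmeas M ->
  measurable_fun setT (fun x => config v (th x) (M x)).
Proof.
move=> mth mM; apply/measurable_fun_tnthP => i.
rewrite (_ : _ \o _ = (fun x => tup_of_cv (M x *m v i + cv_of_tup (th x)))); last first.
  by apply/funext => x /=; rewrite tnth_mktuple.
apply: meas_tup_of_cv; apply: mmeas_add; last exact: mmeas_cv_of_tup.
by apply: mmeas_mul => //; exact: mmeas_cst.
Qed.

End mxmeas.

Lemma mx_of_tupK (R : realType) n (M : 'M[R]_n) : mx_of_tup (tup_of_mx M) = M.
Proof. by apply/matrixP => i j; rewrite mxE !tnth_mktuple. Qed.

Lemma cv_of_tupK (R : realType) n (x : 'cV[R]_n) : cv_of_tup (tup_of_cv x) = x.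
Proof. by apply/matrixP => i j; rewrite mxE tnth_mktuple (ord1 j). Qed.

Section haar.
Context {R : realType} {D : nat} {dO : measure_display} {Omega : measurableType dO}
  (P : probability Omega R) (Q : Omega -> 'M[R]_D).
Hypothesis hQmeas : forall i j, measurable_fun [set: Omega] (fun w => Q w i j).
Hypothesis hQorth : forall w, is_orth_mx (Q w).
Hypothesis hQhaar : forall U : 'M[R]_D, is_orth_mx U ->
     forall g : D.-tuple (D.-tuple R) -> \bar R,
       measurable_fun [set: D.-tuple (D.-tuple R)] g -> (forall x, (0 <= g x)%E) ->
       (\int[P]_w g (tup_of_mx (U *m Q w)) = \int[P]_w g (tup_of_mx (Q w)))%E.

Lemma orth_tr {M : 'M[R]_D} : is_orth_mx M -> is_orth_mx M^T.
Proof. by rewrite /is_orth_mx trmxK => /mulmx1C. Qed.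

Lemma int_cstP (c : \bar R) : (\int[P]_w c = c)%E.
Proof.
have := @integral_cst _ _ _ P setT measurableT c.
move=> ->.
by rewrite -[RHS]mule1; congr (_ * _)%E; exact: probability_setT.
Qed.

Lemma haar_transpose (g : D.-tuple (D.-tuple R) -> \bar R) :
  measurable_fun setT g -> (forall x, (0 <= g x)%E) ->
  (\int[P]_w g (tup_of_mx (Q w)) = \int[P]_w g (tup_of_mx (Q w)^T))%E.
Proof.
move=> mg g0.
have step1 : (\int[P]_w g (tup_of_mx (Q w)) =
   \int[P]_w' \int[P]_w g (tup_of_mx ((Q w')^T *m Q w)))%E.
  under [RHS]eq_integral => w' _ do rewrite (hQhaar _ (orth_tr (hQorth w')) _ mg g0).
  by rewrite int_cstP.
have mf : measurable_fun setT (fun z : Omega * Omega => g (tup_of_mx ((Q z.1)^T *m Q z.2))).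
  apply: measurableT_comp mg _.
  apply: meas_tup_of_mx; apply: mmeas_mul.
    apply: mmeas_tr => i j; exact: (measurableT_comp (hQmeas i j) measurable_fst).
  move=> i j; exact: (measurableT_comp (hQmeas i j) measurable_snd).
rewrite step1.
have := @fubini_tonelli _ _ _ _ _ P P _ mf (fun z => g0 _).
rewrite /= => ->.
pose g' := fun t : D.-tuple (D.-tuple R) => g (tup_of_mx (mx_of_tup t)^T).
have mg' : measurable_fun setT g'.
  apply: measurableT_comp mg _.
  apply: meas_tup_of_mx; apply: mmeas_tr; exact: mmeas_mx_of_tup.
rewrite -[RHS]int_cstP; apply: eq_integral => w _.
transitivity (\int[P]_x g' (tup_of_mx ((Q w)^T *m Q x)))%E.
  by apply: eq_integral => x _; rewrite /g' mx_of_tupK trmx_mul trmxK.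
rewrite (hQhaar _ (orth_tr (hQorth w)) _ mg' (fun x => g0 _)).
by apply: eq_integral => x _; rewrite /g' mx_of_tupK.
Qed.

Lemma haar_right (W : 'M[R]_D) (g : D.-tuple (D.-tuple R) -> \bar R) :
  is_orth_mx W -> measurable_fun setT g -> (forall x, (0 <= g x)%E) ->
  (\int[P]_w g (tup_of_mx (Q w *m W)) = \int[P]_w g (tup_of_mx (Q w)))%E.
Proof.
move=> oW mg g0.
have mg1 : measurable_fun setT (fun t : D.-tuple (D.-tuple R) => g (tup_of_mx (mx_of_tup t *m W))).
  apply: measurableT_comp mg _.
  apply: meas_tup_of_mx; apply: mmeas_mul; [exact: mmeas_mx_of_tup | exact: mmeas_cst].
have mg2 : measurable_fun setT (fun t : D.-tuple (D.-tuple R) => g (tup_of_mx (mx_of_tup t)^T)).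
  apply: measurableT_comp mg _.
  apply: meas_tup_of_mx; apply: mmeas_tr; exact: mmeas_mx_of_tup.
pose g1 := fun t : D.-tuple (D.-tuple R) => g (tup_of_mx (mx_of_tup t *m W)).
pose g2 := fun t : D.-tuple (D.-tuple R) => g (tup_of_mx (mx_of_tup t)^T).
transitivity (\int[P]_w g1 (tup_of_mx (Q w)))%E.
  by apply: eq_integral => x _; rewrite /g1 mx_of_tupK.
rewrite (haar_transpose _ mg1 (fun x => g0 _)).
transitivity (\int[P]_w g2 (tup_of_mx (W^T *m Q w)))%E.
  by apply: eq_integral => x _; rewrite /g1 /g2 !mx_of_tupK trmx_mul trmxK.
rewrite (hQhaar _ (orth_tr oW) _ mg2 (fun x => g0 _)).
rewrite (haar_transpose _ mg (fun x => g0 _)).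
by apply: eq_integral => x _; rewrite /g2 mx_of_tupK.
Qed.

End haar.

Section simplex.
Context {R : realType} {D : nat} (lam : R) (hlam : 0 < lam)
  (v : 'I_D.+1 -> 'cV[R]_D) (hv0 : v ord_max = 0)
  (hdist : forall i j : 'I_D.+1, i != j -> enorm (v i - v j) = lam)
  (d : 'I_D.+1) (hd : d != ord_max).

Definition dot (x y : 'cV[R]_D) : R := (x^T *m y) 0 0.

Lemma dotC x y : dot x y = dot y x.
Proof. by rewrite /dot -[y^T *m x]trmxK trmx_mul trmxK [in RHS]mxE. Qed.

Lemma dotBB x y : dot (x - y) (x - y) = dot x x - 2 * dot x y + dot y y.
Proof.
rewrite /dot.
have -> : (x - y)^T = x^T - y^T by apply/matrixP => i j; rewrite !mxE.
have sub00 : forall A B : 'M[R]_1, (A - B) 0 0 = A 0 0 - B 0 0.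
  by move=> A B; rewrite !mxE.
rewrite mulmxBl !mulmxBr !sub00 -/(dot x x) -/(dot x y) -/(dot y x) -/(dot y y).
rewrite (dotC y x); ring.
Qed.

Lemma enorm_sq x : enorm x ^+ 2 = dot x x.
Proof.
rewrite /enorm sqr_sqrtr; last by apply: sumr_ge0 => i _; exact: sqr_ge0.
rewrite /dot mxE; apply: eq_bigr => i _; by rewrite mxE expr2.
Qed.

Lemma dist_sq i j : i != j -> dot (v i - v j) (v i - v j) = lam ^+ 2.
Proof. by move=> ij; rewrite -enorm_sq hdist. Qed.

Let u := v d.
Let c := dot u u.

Lemma c_eq : c = lam ^+ 2.
Proof. by rewrite /c /u -(dist_sq _ _ hd) hv0 subr0. Qed.

Lemma c_neq0 : c != 0.
Proof. by rewrite c_eq expf_neq0 // gt_eqF. Qed.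

Lemma dot_uv j : j != d -> j != ord_max -> 2 * dot u (v j) = c.
Proof.
move=> jd jm.
have h1 := dist_sq _ _ jm; rewrite hv0 subr0 in h1.
have h2 := dist_sq _ _ jd; rewrite dotBB -/u h1 -/c in h2.
rewrite dotC; move: h2; set a := dot (v j) u; set b := lam ^+ 2.
move=> h2; lra.
Qed.

Definition Hh : 'M[R]_D := 1%:M - ((2 / c) *: (u *m u^T)).

Lemma Hx x : Hh *m x = x - ((2 / c) * dot u x) *: u.
Proof.
rewrite /Hh mulmxBl mul1mx -scalemxAl -mulmxA (mx11_scalar (u^T *m x)).
by rewrite mul_mx_scalar scalerA.
Qed.

Lemma Hu : Hh *m u = - u.
Proof.
rewrite Hx -/c mulrAC -mulrA divff ?c_neq0 // mulr1 scaler_nat.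
by rewrite mulr2n opprD addrA subrr add0r.
Qed.

Lemma Hv j : j != d -> j != ord_max -> Hh *m v j = v j - u.
Proof.
move=> jd jm; have e := dot_uv _ jd jm.
have nz : dot u (v j) != 0.
  by apply: contra c_neq0 => /eqP z; rewrite -e z mulr0.
rewrite Hx (_ : 2 / c * dot u (v j) = 1) ?scale1r // -e.
by field.
Qed.

Lemma H_orth : is_orth_mx Hh.
Proof.
have HT : Hh^T = Hh.
  by rewrite /Hh linearB /= trmx1 linearZ /= trmx_mul trmxK.
rewrite /is_orth_mx HT.
rewrite {1}/Hh mulmxBr mulmx1 -scalemxAr mulmxA Hu mulNmx scalerN.
by rewrite /Hh opprK subrK.
Qed.

Definition sig : 'S_D.+1 := tperm d ord_max.

Lemma H_sig i : Hh *m v (sig i) = v i - v d.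
Proof.
rewrite /sig.
have [->|id] := eqVneq i d; first by rewrite tpermL hv0 mulmx0 subrr.
have [->|im] := eqVneq i ord_max; first by rewrite tpermR Hu hv0 sub0r.
by rewrite tpermD 1?eq_sym // Hv.
Qed.

End simplex.

Lemma tnth_config (R : realType) D (v : 'I_D.+1 -> 'cV[R]_D) th M d :
  tnth (config v th M) d = tadd R (tup_of_cv (M *m v d)) th.
Proof.
apply: eq_from_tnth => i; rewrite !tnth_mktuple.
by rewrite [LHS]mxE [cv_of_tup _ _ _]mxE addrC.
Qed.

Lemma tadd_cancel (R : realType) n (x : 'cV[R]_n) th :
  tadd R (tup_of_cv (- x)) (tadd R (tup_of_cv x) th) = th.
Proof.
apply: eq_from_tnth => i; rewrite !tnth_mktuple mxE.
by rewrite addrK.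
Qed.

Lemma config_perm (R : realType) D (v : 'I_D.+1 -> 'cV[R]_D) (d : 'I_D.+1)
  (Hm : 'M[R]_D) (s : 'S_D.+1) (hs : forall i, Hm *m v (s i) = v i - v d) th M :
  config v (tadd R (tup_of_cv (- (M *m v d))) th) M = perm_tup s (config v th (M *m Hm)).
Proof.
apply: eq_from_tnth => i; rewrite !tnth_mktuple.
congr tup_of_cv.
rewrite -mulmxA hs mulmxBr.
have -> : cv_of_tup (tadd R (tup_of_cv (- (M *m v d))) th) = cv_of_tup th - M *m v d.
  apply/matrixP => k l; rewrite (ord1 l) !mxE !tnth_mktuple !mxE.
  by [].
by rewrite -addrA [cv_of_tup _ - _]addrC.
Qed.
Theorem lemma1 (R : realType) (D : nat) (hD : (1 <= D)%N) (lam : R) (hlam : 0 < lam)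
  (v : 'I_D.+1 -> 'cV[R]_D) (hv0 : v ord_max = 0)
  (hdist : forall i j : 'I_D.+1, i != j -> enorm (v i - v j) = lam)
  (dO : measure_display) (Omega : measurableType dO) (P : probability Omega R)
  (Q : Omega -> 'M[R]_D)
  (hQmeas : forall i j, measurable_fun [set: Omega] (fun w => Q w i j))
  (hQorth : forall w, is_orth_mx (Q w))
  (hQhaar : forall U : 'M[R]_D, is_orth_mx U ->
     forall g : D.-tuple (D.-tuple R) -> \bar R,
       measurable_fun [set: D.-tuple (D.-tuple R)] g -> (forall x, (0 <= g x)%E) ->
       (\int[P]_w g (tup_of_mx (U *m Q w)) = \int[P]_w g (tup_of_mx (Q w)))%E)
  (f : D.-tuple R * D.+1.-tuple (D.-tuple R) -> \bar R)
  (hfmeas : measurable_fun [set: D.-tuple R * D.+1.-tuple (D.-tuple R)] f)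
  (hf0 : forall x, (0 <= f x)%E)
  (hfsym : forall theta Theta (s : 'S_D.+1), f (theta, perm_tup s Theta) = f (theta, Theta))
  (d : 'I_D.+1) :
  leb_int (fun theta : D.-tuple R => \int[P]_w f (theta, config v theta (Q w)))%E
  = leb_int (fun theta : D.-tuple R =>
       \int[P]_w f (tnth (config v theta (Q w)) d, config v theta (Q w)))%E.
Proof.
have mQ : forall i j, measurable_fun setT (fun z : Omega * D.-tuple R => Q z.1 i j).
  by move=> i j; exact: (measurableT_comp (hQmeas i j) measurable_fst).
have mconf : measurable_fun setT (fun z : Omega * D.-tuple R => config v z.2 (Q z.1)).
  exact: (@meas_config R _ _ D v _ (fun z : Omega * D.-tuple R => Q z.1) measurable_snd mQ).
have [->|hd] := eqVneq d ord_max.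
  congr leb_int; apply/funext => th; apply: eq_integral => w _.
  congr (f (_, _)).
  rewrite tnth_config hv0 mulmx0.
  by apply: eq_from_tnth => i; rewrite !tnth_mktuple mxE addr0.
pose F1 := fun z : Omega * D.-tuple R => f (z.2, config v z.2 (Q z.1)).
pose F2 := fun z : Omega * D.-tuple R => f (tnth (config v z.2 (Q z.1)) d, config v z.2 (Q z.1)).
have mF1 : measurable_fun setT F1.
  exact: (measurableT_comp hfmeas (measurable_fun_pair measurable_snd mconf)).
have mF2 : measurable_fun setT F2.
  apply: (measurableT_comp hfmeas (measurable_fun_pair _ mconf)).
  exact: (measurableT_comp (@measurable_tnth _ _ _ d) mconf).
have E1 := @leb_int_tonelli R D _ _ P _ mF1 (fun z => hf0 _).
have E2 := @leb_int_tonelli R D _ _ P _ mF2 (fun z => hf0 _).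
transitivity (\int[P]_w leb_int (fun t => F1 (w, t)))%E; first by rewrite E1.
transitivity (\int[P]_w leb_int (fun t => F2 (w, t)))%E; last by rewrite E2.
pose h := fun t : D.-tuple (D.-tuple R) => leb_int (fun th => f (th, config v th (mx_of_tup t))).
have mh : measurable_fun setT h.
  apply: (@leb_int_meas R D _ _ (fun z : D.-tuple (D.-tuple R) * D.-tuple R =>
            f (z.2, config v z.2 (mx_of_tup z.1)))).
    apply: (measurableT_comp hfmeas (measurable_fun_pair measurable_snd _)).
    apply: meas_config => //; exact: mmeas_mx_of_tup.
  by move=> z; exact: hf0.
have h0 : forall t, (0 <= h t)%E by move=> t; apply: leb_int_ge0 => th; exact: hf0.
have oH := H_orth _ hlam _ hv0 hdist _ hd.
transitivity (\int[P]_w h (tup_of_mx (Q w)))%E.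
  by apply: eq_integral => w _; rewrite /h mx_of_tupK.
rewrite -(haar_right P Q hQmeas hQorth hQhaar _ _ oH mh h0).
apply: eq_integral => w _.
rewrite /h mx_of_tupK.
set M := Q w.
pose b := tup_of_cv (- (M *m v d)).
pose G := fun th => f (th, config v (tadd R b th) M).
have mc : measurable_fun setT (fun th : D.-tuple R => config v (tadd R b th) M).
  apply: meas_config; last exact: mmeas_cst.
  have mt : measurable_fun setT (fun x : D.-tuple R => ((b, x) : D.-tuple R * D.-tuple R)).
    apply: measurable_fun_pair => //; exact: measurable_cst.
  exact: (measurableT_comp (tadd_meas R D) mt).
have mG : measurable_fun setT G.
  have mp : measurable_fun setT (fun th : D.-tuple R => (th, config v (tadd R b th) M)).
    by apply: measurable_fun_pair.
  exact: (measurableT_comp hfmeas mp).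
transitivity (leb_int G).
  congr leb_int; apply/funext => th; rewrite /G.
  by rewrite (@config_perm R D v d _ _ (H_sig _ hlam _ hv0 hdist _ hd)) hfsym.
rewrite -(@leb_int_shift R D (tup_of_cv (M *m v d)) G mG (fun t => hf0 _)).
congr leb_int; apply/funext => th.
by rewrite /G /F2 /= tnth_config tadd_cancel.
Qed.
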